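(* Let $N\ge2$, $\alpha,\beta>-1$, let $x_0<\dots<x_N$ be the JGL nodes with Lagrange basis $h_0,\dots,h_N$, and let $\mu\in(k-1,k)$ with $k\in\{1,2\}$. Suppose $Q_j^\mu\in\mathcal P_N$ satisfy: if $k=1$, for $1\le j\le N$, ${}^C D_-^\mu Q_j^\mu(x_i)=\delta_{ij}$ for $1\le i\le N$ and $Q_j^\mu(-1)=0$; if $k=2$, for $1\le j\le N-1$, ${}^C D_-^\mu Q_j^\mu(x_i)=\delta_{ij}$ for $1\le i\le N-1$ and $Q_j^\mu(\pm1)=0$. Let $\mathbf Q^{(\mu)}$ be the matrix with entries $\mathbf Q^{(\mu)}_{lj}=Q_j^\mu(x_l)$, $1\le l,j\le N+1-k$, and let ${}^C\mathbf D^{(\mu)}_{\rm in}$ be the matrix with entries $({}^C D_-^\mu h_j)(x_i)$, $1\le i,j\le N+1-k$. Then $$ \mathbf Q^{(\mu)}\,{}^C\mathbf D^{(\mu)}_{\rm in}={}^C\mathbf D^{(\mu)}_{\rm in}\,\mathbf Q^{(\mu)}=\mathbf I_{N+1-k}. $$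
   Context: For $\rho>0$, $(I_-^\rho u)(x)=\frac{1}{\Gamma(\rho)}\int_{-1}^x (x-y)^{\rho-1}u(y)\,dy$, $D^k=d^k/dx^k$, and for $\mu\in(k-1,k)$ the Caputo derivative is ${}^C D_-^\mu u=I_-^{k-\mu}(D^k u)$. The JGL nodes $x_0<\dots<x_N$ are the zeros of $(1-x^2)\frac{d}{dx}P_N^{(\alpha,\beta)}(x)$ (Jacobi polynomial, Szegő normalization), so $x_0=-1$, $x_N=1$; $h_j\in\mathcal P_N$ is the Lagrange basis polynomial with $h_j(x_i)=\delta_{ij}$. $\mathbf I_m$ is the $m\times m$ identity matrix. *)

(* Defs.v *)
From Stdlib Require Import Reals Lra Lia Arith.
Open Scope R_scope.

Fixpoint falling (r : R) (m : nat) : R :=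
  match m with
  | O => 1
  | S m' => falling r m' * (r - INR m')
  end.
Definition gbinom (r : R) (m : nat) : R := falling r m / INR (fact m).

(* Jacobi polynomial, Szego normalization (Szego (4.3.2)):
   P_n^{(a,b)}(t) = sum_{s=0}^n binom(n+a, n-s) binom(n+b, s) ((t-1)/2)^s ((t+1)/2)^(n-s) *)
Definition jacobiP (n : nat) (a b : R) (t : R) : R :=
  sum_f_R0 (fun s => gbinom (INR n + a) (n - s) * gbinom (INR n + b) s
                      * ((t - 1) / 2) ^ s * ((t + 1) / 2) ^ (n - s)) n.

Definition lagrange (x : nat -> R) (N j : nat) (t : R) : R :=
  prod_f_R0 (fun m => if Nat.eq_dec m j then 1 else (t - x m) / (x j - x m)) N.

Definition in_PN (N : nat) (u : R -> R) : Prop :=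
  exists c : nat -> R, forall t, u t = sum_f_R0 (fun m => c m * t ^ m) N.

Definition is_deriv (u g : R -> R) : Prop := forall y, derivable_pt_lim u y (g y).

Fixpoint is_nderiv (k : nat) (u g : R -> R) : Prop :=
  match k with
  | O => forall y, g y = u y
  | S k' => exists u1, is_deriv u u1 /\ is_nderiv k' u1 g
  end.

Definition riemann_int (f : R -> R) (a b I : R) : Prop :=
  exists pr : Riemann_integrable f a b, RiemannInt pr = I.

Definition is_Gamma (rho G : R) : Prop :=
  forall eps, 0 < eps -> exists delta M, 0 < delta /\
    forall a b, 0 < a < delta -> M < b ->
      exists I, riemann_int (fun t => Rpower t (rho - 1) * exp (- t)) a b I
                /\ Rabs (I - G) < eps.

(* v = (I_-^rho g)(x) = 1/Gamma(rho) int_{-1}^x (x-y)^(rho-1) g(y) dy,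
   the integral being the (possibly improper at y = x) limit
   lim_{b -> x^-} int_{-1}^b (x-y)^(rho-1) g(y) dy   (for x > -1). *)
Definition frac_int (rho : R) (g : R -> R) (x v : R) : Prop :=
  exists G L, is_Gamma rho G /\ v = L / G /\
    forall eps, 0 < eps -> exists delta, 0 < delta /\
      forall b, -1 <= b -> x - delta < b < x ->
        exists I, riemann_int (fun y => Rpower (x - y) (rho - 1) * g y) (-1) b I
                  /\ Rabs (I - L) < eps.

Definition caputo (mu : R) (k : nat) (u : R -> R) (x v : R) : Prop :=
  exists g, is_nderiv k u g /\ frac_int (INR k - mu) g x v.

Definition kdelta (i j : nat) : R := if Nat.eq_dec i j then 1 else 0.

(* Main.v *)
Require Import Defs.
From Stdlib Require Import Reals Lra Lia FunctionalExtensionality.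
Open Scope R_scope.
From mathcomp Require all_boot all_algebra Rstruct.
Module MX.
Import all_boot all_algebra Rstruct.
Import GRing.Theory.
Local Open Scope ring_scope.

Lemma sumR_big (F : nat -> R) n : sum_f_R0 F n = \sum_(l < n.+1) F l.
Proof.
elim: n => [|n IH]; first by rewrite big_ord1.
by rewrite big_ord_recr /= -IH.
Qed.

Lemma inv_comm (n : nat) (f g : nat -> nat -> R) :
 (forall i j, (i <= n)%coq_nat -> (j <= n)%coq_nat -> sum_f_R0 (fun l => Rmult (f i l) (g l j)) n = kdelta i j) ->
 forall i j, (i <= n)%coq_nat -> (j <= n)%coq_nat -> sum_f_R0 (fun l => Rmult (g i l) (f l j)) n = kdelta i j.
Proof.
move=> H i j hi hj.
pose A : 'M[R]_n.+1 := \matrix_(a, b) f a b.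
pose B : 'M[R]_n.+1 := \matrix_(a, b) g a b.
have AB : (A *m B = 1%:M)%R.
  apply/matrixP => a b; rewrite !mxE.
  under eq_bigr => l _ do rewrite !mxE.
  rewrite (_ : \sum_l _ = sum_f_R0 (fun l => f a l * g l b) n); last exact: (esym (sumR_big _ _)).
  rewrite H; try (apply/leP; rewrite -ltnS; exact: ltn_ord).
  rewrite /kdelta; case: Nat.eq_dec => [/val_inj -> | ne]; first by rewrite eqxx.
  by case: eqP => // e; case: ne; rewrite e.
have := mulmx1C AB => /matrixP/(_ (inord i) (inord j)).
rewrite !mxE.
under eq_bigr => l _ do rewrite !mxE.
rewrite (_ : \sum_l _ = sum_f_R0 (fun l => g i l * f l j) n); last first.
  rewrite sumR_big; apply: eq_bigr => l _. rewrite !inordK //; rewrite ltnS; apply/leP; assumption.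
move=> ->; rewrite /kdelta; case: Nat.eq_dec => [-> | ne]; first by rewrite eqxx.
case: eqP => // /(congr1 val); rewrite /= !inordK; try (rewrite ltnS; apply/leP; assumption).
by [].
Qed.
End MX.

Lemma in_PN_ext n p q : (forall t, p t = q t) -> in_PN n p -> in_PN n q.
Proof. intros E [c H]; exists c; intro t; rewrite <- E; apply H. Qed.

Lemma in_PN_lin2 n p q r1 r2 : in_PN n p -> in_PN n q ->
  in_PN n (fun t => r1 * p t + r2 * q t).
Proof.
  intros [c1 H1] [c2 H2]; exists (fun m => r1 * c1 m + r2 * c2 m); intro t.
  rewrite H1, H2, !scal_sum, <- sum_plus; apply sum_eq; intros; ring.
Qed.

Lemma in_PN_lift n p : in_PN n p -> in_PN (S n) p.
Proof.
  intros [c H]; exists (fun m => if Nat.eq_dec m (S n) then 0 else c m); intro t.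
  rewrite H. change (sum_f_R0 ?f (S n)) with (sum_f_R0 f n + f (S n)).
  cbv beta. match goal with |- context [Nat.eq_dec ?a ?a] => destruct (Nat.eq_dec a a); [|congruence] end.
  rewrite Rmult_0_l, Rplus_0_r; apply sum_eq; intros i Hi.
  destruct (Nat.eq_dec i (S n)); [lia|reflexivity].
Qed.

Lemma in_PN_const n c : in_PN n (fun _ => c).
Proof.
  induction n. exists (fun _ => c); intro t; simpl; ring.
  apply in_PN_lift; auto.
Qed.

Lemma in_PN_mul_t n p : in_PN n p -> in_PN (S n) (fun t => t * p t).
Proof.
  intros [c H]; exists (fun m => match m with O => 0 | S m' => c m' end); intro t.
  rewrite H, (decomp_sum _ (S n)) by lia; simpl pred.
  rewrite scal_sum; simpl; rewrite Rmult_0_l, Rplus_0_l.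
  apply sum_eq; intros; simpl; ring.
Qed.

Lemma in_PN_pow m n : (m <= n)%nat -> in_PN n (fun t => t ^ m).
Proof.
  revert n; induction m; intros n Hn.
  - apply (in_PN_ext n (fun _ => 1)); [intros; simpl; ring| apply in_PN_const].
  - destruct n; [lia|].
    apply (in_PN_ext (S n) (fun t => t * t ^ m)); [intros; simpl; ring|].
    apply in_PN_mul_t, IHm; lia.
Qed.

Lemma in_PN_sum n K (f : nat -> R -> R) : (forall m, (m <= K)%nat -> in_PN n (f m)) ->
  in_PN n (fun t => sum_f_R0 (fun m => f m t) K).
Proof.
  induction K; intros H.
  - apply (in_PN_ext n (f 0%nat)); [intros; simpl; ring| apply H; lia].
  - apply (in_PN_ext n (fun t => 1 * sum_f_R0 (fun m => f m t) K + 1 * f (S K) t)).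
    + intros; simpl; ring.
    + apply in_PN_lin2; [apply IHK; intros; apply H; lia| apply H; lia].
Qed.

Fixpoint sgeo (a t : R) (m : nat) : R :=
  match m with O => 0 | S m' => t ^ m' + a * sgeo a t m' end.

Lemma sgeo_eq a t m : t ^ m - a ^ m = (t - a) * sgeo a t m.
Proof.
  induction m; simpl. ring.
  replace ((t - a) * (t ^ m + a * sgeo a t m)) with ((t-a) * t^m + a * ((t - a) * sgeo a t m)) by ring.
  rewrite <- IHm; ring.
Qed.

Lemma sgeo_PN a n m : (m <= S n)%nat -> in_PN n (fun t => sgeo a t m).
Proof.
  induction m; intros Hm; simpl.
  - apply in_PN_const.
  - apply (in_PN_ext n (fun t => 1 * t ^ m + a * sgeo a t m)); [intros; ring|].
    apply in_PN_lin2; [apply in_PN_pow; lia| apply IHm; lia].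
Qed.

Lemma factor n p a : in_PN (S n) p -> p a = 0 ->
  exists q, in_PN n q /\ forall t, p t = (t - a) * q t.
Proof.
  intros [c H] Ha.
  exists (fun t => sum_f_R0 (fun m => c m * sgeo a t m) (S n)); split.
  - apply in_PN_sum; intros m Hm.
    apply (in_PN_ext n (fun t => 0 * 0 + c m * sgeo a t m)); [intros; ring|].
    apply in_PN_lin2; [apply in_PN_const| apply sgeo_PN; lia].
  - intro t. replace (p t) with (p t - p a) by (rewrite Ha; ring).
    rewrite !H, <- minus_sum, scal_sum; apply sum_eq; intros i _.
    replace (c i * t ^ i - c i * a ^ i) with (c i * (t ^ i - a ^ i)) by ring.
    rewrite sgeo_eq; ring.
Qed.

Lemma roots n : forall p (z : nat -> R), in_PN n p ->
  (forall i, (i <= n)%nat -> p (z i) = 0) ->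
  (forall i j, (i <= n)%nat -> (j <= n)%nat -> i <> j -> z i <> z j) ->
  forall t, p t = 0.
Proof.
  induction n; intros p z Hp Hz Hd t.
  - destruct Hp as [c H]. pose proof (Hz 0%nat (le_n 0)) as H0.
    rewrite H in H0 |- *; simpl in *. lra.
  - destruct (factor n p (z (S n)) Hp (Hz (S n) (le_n _))) as [q [Hq Hpq]].
    assert (Q0 : forall t, q t = 0).
    { apply (IHn q z Hq); [|intros; apply Hd; lia].
      intros i Hi. pose proof (Hz i ltac:(lia)) as E. rewrite Hpq in E.
      apply Rmult_integral in E; destruct E as [E|E]; auto.
      exfalso; apply (Hd i (S n)); [lia|lia|lia|lra]. }
    rewrite Hpq, Q0; ring.
Qed.

Lemma prod_one f n : (forall m, (m <= n)%nat -> f m = 1) -> prod_f_R0 f n = 1.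
Proof.
  induction n; intros H; simpl. apply H; lia.
  rewrite IHn, H; [ring|lia|]. intros; apply H; lia.
Qed.

Lemma prod_zero f n i : (i <= n)%nat -> f i = 0 -> prod_f_R0 f n = 0.
Proof.
  induction n; intros Hi H; simpl.
  - replace i with 0%nat in H by lia; auto.
  - destruct (Nat.eq_dec i (S n)). subst; rewrite H; ring.
    rewrite IHn; [ring|lia|auto].
Qed.

Lemma sum_zero f n : (forall m, (m <= n)%nat -> f m = 0) -> sum_f_R0 f n = 0.
Proof.
  induction n; intros H; simpl. apply H; lia.
  rewrite IHn, H; [ring|lia|]. intros; apply H; lia.
Qed.

Lemma sum_kdelta c n i : (i <= n)%nat -> sum_f_R0 (fun l => c l * kdelta i l) n = c i.
Proof.
  unfold kdelta. induction n; intros Hi; simpl.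
  - replace i with 0%nat by lia; simpl; ring.
  - destruct (Nat.eq_dec i (S n)).
    + subst. rewrite sum_zero. destruct (Nat.eq_dec (S n) (S n)); [ring|congruence].
      intros m Hm; destruct (Nat.eq_dec (S n) m); [lia|ring].
    + rewrite IHn by lia. destruct (Nat.eq_dec i (S n)); [congruence|ring].
Qed.

Lemma lin_factor d p a b : in_PN d p -> in_PN (S d) (fun t => p t * ((t - a) / b)).
Proof.
  intros H.
  apply (in_PN_ext (S d) (fun t => / b * (t * p t) + (- a / b) * p t)).
  - intros; unfold Rdiv; ring.
  - apply in_PN_lin2; [apply in_PN_mul_t; auto| apply in_PN_lift; auto].
Qed.

Lemma lagrange_PN_aux x j m :
  ((m < j)%nat -> in_PN (S m) (fun t => prod_f_R0 (fun l => if Nat.eq_dec l j then 1 else (t - x l) / (x j - x l)) m)) /\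
  ((j <= m)%nat -> in_PN m (fun t => prod_f_R0 (fun l => if Nat.eq_dec l j then 1 else (t - x l) / (x j - x l)) m)).
Proof.
  induction m; cbn [prod_f_R0]; split; intros Hm.
  - destruct (Nat.eq_dec 0 j); [lia|].
    apply (in_PN_ext 1 (fun t => 1 * ((t - x 0%nat) / (x j - x 0%nat)))); [intros; ring|].
    apply lin_factor, in_PN_const.
  - destruct (Nat.eq_dec 0 j); [|lia]. apply in_PN_const.
  - destruct (Nat.eq_dec (S m) j); [lia|].
    apply lin_factor, (proj1 IHm); lia.
  - destruct IHm as [IH1 IH2]. destruct (Nat.eq_dec (S m) j).
    + apply (in_PN_ext (S m) (fun t => prod_f_R0 (fun l => if Nat.eq_dec l j then 1 else (t - x l) / (x j - x l)) m)); [intros; ring|].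
      apply IH1; lia.
    + apply lin_factor, IH2; lia.
Qed.

Lemma lagrange_PN x N j : (j <= N)%nat -> in_PN N (lagrange x N j).
Proof.
  intros Hj. apply (in_PN_ext N (fun t => prod_f_R0 (fun l => if Nat.eq_dec l j then 1 else (t - x l) / (x j - x l)) N)); [reflexivity|].
  apply (proj2 (lagrange_PN_aux x j N)); auto.
Qed.

Lemma lagrange_val x N i j : (i <= N)%nat -> (j <= N)%nat ->
  (forall a b, (a <= N)%nat -> (b <= N)%nat -> a <> b -> x a <> x b) ->
  lagrange x N j (x i) = kdelta i j.
Proof.
  intros Hi Hj Hd; unfold lagrange, kdelta.
  destruct (Nat.eq_dec i j).
  - subst; apply prod_one; intros m Hm.
    destruct (Nat.eq_dec m j); auto.
    field; intro E; apply (Hd j m); auto; lra.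
  - apply (prod_zero _ _ i); auto.
    destruct (Nat.eq_dec i j); [congruence|]. unfold Rdiv; ring.
Qed.

Lemma interp x N p : in_PN N p ->
  (forall a b, (a <= N)%nat -> (b <= N)%nat -> a <> b -> x a <> x b) ->
  forall t, p t = sum_f_R0 (fun l => p (x l) * lagrange x N l t) N.
Proof.
  intros Hp Hd t.
  cut (p t - sum_f_R0 (fun l => p (x l) * lagrange x N l t) N = 0); [lra|].
  apply (roots N (fun t => p t - sum_f_R0 (fun l => p (x l) * lagrange x N l t) N) x); auto.
  - apply (in_PN_ext N (fun t => 1 * p t + (-1) * sum_f_R0 (fun l => p (x l) * lagrange x N l t) N)); [intros; ring|].
    apply in_PN_lin2; auto. apply in_PN_sum; intros m Hm.
    apply (in_PN_ext N (fun t => 0 * 0 + p (x m) * lagrange x N m t)); [intros; ring|].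
    apply in_PN_lin2; [apply in_PN_const| apply lagrange_PN; auto].
  - intros i Hi. rewrite (sum_eq _ (fun l => p (x l) * kdelta i l)).
    rewrite sum_kdelta; auto; ring.
    intros l Hl; rewrite lagrange_val; auto.
Qed.

Lemma abs_tri3 a b c : Rabs (a - b) <= Rabs (c - a) + Rabs (c - b).
Proof. unfold Rabs; repeat destruct Rcase_abs; lra. Qed.

Lemma nderiv_unique k : forall u g1 g2, is_nderiv k u g1 -> is_nderiv k u g2 -> forall y, g1 y = g2 y.
Proof.
  induction k; simpl; intros u g1 g2 H1 H2 y.
  - rewrite H1, H2; reflexivity.
  - destruct H1 as [u1 [D1 N1]], H2 as [u2 [D2 N2]].
    assert (E : u1 = u2) by (apply functional_extensionality; intro t; eapply uniqueness_limite; [apply D1|apply D2]).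
    subst; eapply IHk; eauto.
Qed.

Lemma nderiv_lin k : forall u w g h c, is_nderiv k u g -> is_nderiv k w h ->
  is_nderiv k (fun t => u t + c * w t) (fun t => g t + c * h t).
Proof.
  induction k; simpl; intros u w g h c H1 H2.
  - intro y; rewrite H1, H2; reflexivity.
  - destruct H1 as [u1 [D1 N1]], H2 as [w1 [D2 N2]].
    exists (fun t => u1 t + c * w1 t); split.
    + intro y. exact (derivable_pt_lim_plus _ _ y _ _ (D1 y) (derivable_pt_lim_scal _ c y _ (D2 y))).
    + apply IHk; auto.
Qed.

Lemma riemann_unique f a b I1 I2 : riemann_int f a b I1 -> riemann_int f a b I2 -> I1 = I2.
Proof. intros [p1 E1] [p2 E2]; subst; apply RiemannInt_P5. Qed.

Lemma Gamma_unique rho G1 G2 : is_Gamma rho G1 -> is_Gamma rho G2 -> G1 = G2.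
Proof.
  intros H1 H2. destruct (Req_dec G1 G2) as [|Hne]; auto. exfalso.
  set (eps := Rabs (G1 - G2) / 2).
  assert (He : 0 < eps) by (unfold eps; assert (0 < Rabs (G1 - G2)) by (apply Rabs_pos_lt; lra); lra).
  destruct (H1 eps He) as [d1 [M1 [Hd1 P1]]]. destruct (H2 eps He) as [d2 [M2 [Hd2 P2]]].
  set (a := Rmin d1 d2 / 2). set (b := Rmax M1 M2 + 1).
  assert (Ha : 0 < a) by (unfold a; pose proof (Rmin_glb_lt d1 d2 0 Hd1 Hd2); lra).
  assert (a < d1) by (unfold a; pose proof (Rmin_l d1 d2); pose proof (Rmin_glb_lt d1 d2 0 Hd1 Hd2); lra).
  assert (a < d2) by (unfold a; pose proof (Rmin_r d1 d2); pose proof (Rmin_glb_lt d1 d2 0 Hd1 Hd2); lra).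
  assert (M1 < b) by (unfold b; pose proof (Rmax_l M1 M2); lra).
  assert (M2 < b) by (unfold b; pose proof (Rmax_r M1 M2); lra).
  destruct (P1 a b ltac:(lra) ltac:(lra)) as [I1 [R1 A1]].
  destruct (P2 a b ltac:(lra) ltac:(lra)) as [I2 [R2 A2]].
  rewrite <- (riemann_unique _ _ _ _ _ R1 R2) in A2.
  pose proof (abs_tri3 G1 G2 I1). unfold eps in *. lra.
Qed.

Lemma frac_unique rho g x v1 v2 : -1 < x -> frac_int rho g x v1 -> frac_int rho g x v2 -> v1 = v2.
Proof.
  intros Hx [G1 [L1 [HG1 [E1 P1]]]] [G2 [L2 [HG2 [E2 P2]]]].
  rewrite (Gamma_unique _ _ _ HG1 HG2) in E1. subst.
  destruct (Req_dec L1 L2) as [->|Hne]; auto. exfalso.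
  set (eps := Rabs (L1 - L2) / 2).
  assert (He : 0 < eps) by (unfold eps; assert (0 < Rabs (L1 - L2)) by (apply Rabs_pos_lt; lra); lra).
  destruct (P1 eps He) as [d1 [Hd1 Q1]]. destruct (P2 eps He) as [d2 [Hd2 Q2]].
  pose proof (Rmin_l d1 d2); pose proof (Rmin_r d1 d2); pose proof (Rmin_glb_lt d1 d2 0 Hd1 Hd2).
  set (b := Rmax (-1) (x - Rmin d1 d2 / 2)).
  assert (-1 <= b) by apply Rmax_l.
  assert (x - Rmin d1 d2 / 2 <= b) by apply Rmax_r.
  assert (b < x) by (apply Rmax_lub_lt; lra).
  destruct (Q1 b ltac:(lra) ltac:(lra)) as [I1 [R1 A1]].
  destruct (Q2 b ltac:(lra) ltac:(lra)) as [I2 [R2 A2]].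
  rewrite <- (riemann_unique _ _ _ _ _ R1 R2) in A2.
  pose proof (abs_tri3 L1 L2 I1). unfold eps in *. lra.
Qed.

Lemma frac_lin rho g1 g2 x v1 v2 c : frac_int rho g1 x v1 -> frac_int rho g2 x v2 ->
  frac_int rho (fun y => g1 y + c * g2 y) x (v1 + c * v2).
Proof.
  intros [G1 [L1 [HG1 [E1 P1]]]] [G2 [L2 [HG2 [E2 P2]]]].
  rewrite <- (Gamma_unique _ _ _ HG1 HG2) in E2. subst.
  exists G1, (L1 + c * L2); split; [auto|split; [unfold Rdiv; ring|]].
  intros eps He.
  set (e2 := eps / (2 * (Rabs c + 1))).
  assert (Hc : 0 <= Rabs c) by apply Rabs_pos.
  assert (He2 : 0 < e2) by (unfold e2; apply Rdiv_lt_0_compat; lra).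
  assert (Ee2 : (Rabs c + 1) * e2 = eps / 2) by (unfold e2; field; lra).
  assert (Ce2 : Rabs c * e2 <= eps / 2) by nra.
  destruct (P1 (eps / 2) ltac:(lra)) as [d1 [Hd1 Q1]]. destruct (P2 e2 He2) as [d2 [Hd2 Q2]].
  exists (Rmin d1 d2); split; [apply Rmin_glb_lt; auto|].
  intros b Hb Hbx. pose proof (Rmin_l d1 d2); pose proof (Rmin_r d1 d2).
  destruct (Q1 b Hb ltac:(lra)) as [I1 [[p1 R1] A1]].
  destruct (Q2 b Hb ltac:(lra)) as [I2 [[p2 R2] A2]].
  exists (I1 + c * I2); split.
  - assert (Ef : (fun y => Rpower (x - y) (rho - 1) * (g1 y + c * g2 y)) =
                 (fun y => Rpower (x - y) (rho - 1) * g1 y + c * (Rpower (x - y) (rho - 1) * g2 y)))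
      by (apply functional_extensionality; intro; ring).
    rewrite Ef. exists (RiemannInt_P10 c p1 p2).
    rewrite (RiemannInt_P13 p1 p2). subst; reflexivity.
  - replace (I1 + c * I2 - (L1 + c * L2)) with ((I1 - L1) + c * (I2 - L2)) by ring.
    pose proof (Rabs_triang (I1 - L1) (c * (I2 - L2))). rewrite Rabs_mult in H1.
    assert (Rabs c * Rabs (I2 - L2) <= Rabs c * e2) by (apply Rmult_le_compat_l; lra).
    lra.
Qed.

Lemma caputo_lin mu k u w x v1 v2 c : caputo mu k u x v1 -> caputo mu k w x v2 ->
  caputo mu k (fun t => u t + c * w t) x (v1 + c * v2).
Proof.
  intros [g1 [N1 F1]] [g2 [N2 F2]].
  exists (fun t => g1 t + c * g2 t); split; [apply nderiv_lin|apply frac_lin]; auto.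
Qed.

Lemma caputo_unique mu k u x v1 v2 : -1 < x -> caputo mu k u x v1 -> caputo mu k u x v2 -> v1 = v2.
Proof.
  intros Hx [g1 [N1 F1]] [g2 [N2 F2]].
  assert (g1 = g2) by (apply functional_extensionality; eapply nderiv_unique; eauto).
  subst; eapply frac_unique; eauto.
Qed.

Lemma caputo_ext mu k u w x v v' : (forall t, u t = w t) -> v = v' -> caputo mu k u x v -> caputo mu k w x v'.
Proof.
  intros E Ev H. assert (u = w) by (apply functional_extensionality; auto). subst; auto.
Qed.

Lemma caputo_sum mu k x K (h : nat -> R -> R) (c v : nat -> R) :
  (forall l, (l <= K)%nat -> caputo mu k (h l) x (v l)) ->
  caputo mu k (fun t => sum_f_R0 (fun l => c l * h l t) K) x (sum_f_R0 (fun l => c l * v l) K).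
Proof.
  induction K; intros H.
  - pose proof (H 0%nat (le_n 0)) as H0.
    pose proof (caputo_lin _ _ _ _ _ _ _ (-1) H0 H0) as Z.
    pose proof (caputo_lin _ _ _ _ _ _ _ (c 0%nat) Z H0) as W.
    eapply caputo_ext; [| |exact W]; intros; simpl; ring.
  - pose proof (caputo_lin _ _ _ _ _ _ _ (c (S K)) (IHK ltac:(intros; apply H; lia)) (H (S K) (le_n _))) as W.
    eapply caputo_ext; [| |exact W]; intros; simpl; ring.
Qed.

Lemma mono x N : (forall i, (i < N)%nat -> x i < x (S i)) ->
  forall i j, (i < j)%nat -> (j <= N)%nat -> x i < x j.
Proof.
  intros H i j; induction j; intros Hij HjN; [lia|].
  destruct (Nat.eq_dec i j). subst; apply H; lia.
  pose proof (IHj ltac:(lia) ltac:(lia)); pose proof (H j ltac:(lia)); lra.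
Qed.

Lemma kdelta_S a b : kdelta (S a) (S b) = kdelta a b.
Proof. unfold kdelta; destruct (Nat.eq_dec (S a) (S b)), (Nat.eq_dec a b); lia || reflexivity. Qed.

Theorem theorem4p1
  (N : nat) (alpha beta : R) (x : nat -> R) (k : nat) (mu : R)
  (Q : nat -> R -> R) (D : nat -> nat -> R) :
  (2 <= N)%nat -> -1 < alpha -> -1 < beta ->
  (forall i, (i < N)%nat -> x i < x (S i)) ->
  (forall t, (exists d, derivable_pt_lim (jacobiP N alpha beta) t d
                         /\ (1 - t ^ 2) * d = 0)
             <-> exists i, (i <= N)%nat /\ x i = t) ->
  x 0%nat = -1 -> x N = 1 ->
  (k = 1 \/ k = 2)%nat -> INR k - 1 < mu < INR k ->
  (forall j, (1 <= j <= N + 1 - k)%nat ->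
     in_PN N (Q j) /\
     (forall i, (1 <= i <= N + 1 - k)%nat -> caputo mu k (Q j) (x i) (kdelta i j)) /\
     Q j (-1) = 0 /\
     (k = 2%nat -> Q j 1 = 0)) ->
  (forall i j, (1 <= i <= N + 1 - k)%nat -> (1 <= j <= N + 1 - k)%nat ->
     caputo mu k (lagrange x N j) (x i) (D i j)) ->
  forall i j, (1 <= i <= N + 1 - k)%nat -> (1 <= j <= N + 1 - k)%nat ->
    sum_f 1 (N + 1 - k) (fun l => Q l (x i) * D l j) = kdelta i j /\
    sum_f 1 (N + 1 - k) (fun l => D i l * Q j (x l)) = kdelta i j.
Proof.
  intros HN _ _ Hx _ Hx0 HxN Hk _ HQ HD.
  assert (Hinj : forall a b, (a <= N)%nat -> (b <= N)%nat -> a <> b -> x a <> x b).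
  { intros a b Ha Hb Hab. destruct (Nat.lt_ge_cases a b).
    - pose proof (mono x N Hx a b ltac:(lia) Hb); lra.
    - pose proof (mono x N Hx b a ltac:(lia) Ha); lra. }
  set (K := (N - k)%nat).
  assert (HK : (N + 1 - k - 1 = K)%nat) by (unfold K; lia).
  assert (Hint : forall j, (1 <= j <= N + 1 - k)%nat -> forall t,
            Q j t = sum_f_R0 (fun l => Q j (x (S l)) * lagrange x N (S l) t) K).
  { intros j Hj t. destruct (HQ j Hj) as [HP [_ [Hm Hp]]].
    rewrite (interp x N (Q j) HP Hinj t).
    rewrite (decomp_sum _ N) by lia. rewrite Hx0, Hm, Rmult_0_l, Rplus_0_l.
    destruct Hk as [Hk|Hk].
    - unfold K; rewrite Hk. replace (pred N) with (N - 1)%nat by lia. reflexivity.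
    - replace (pred N) with (S K) by (unfold K; lia).
      change (sum_f_R0 ?f (S K)) with (sum_f_R0 f K + f (S K)). cbv beta.
      replace (S (S K)) with N by (unfold K; lia).
      rewrite HxN, Hp by auto. ring. }
  assert (HDQ : forall i j, (1 <= i <= N + 1 - k)%nat -> (1 <= j <= N + 1 - k)%nat ->
            kdelta i j = sum_f_R0 (fun l => Q j (x (S l)) * D i (S l)) K).
  { intros i j Hi Hj.
    destruct (HQ j Hj) as [_ [Hc _]].
    assert (Hxi : -1 < x i) by (rewrite <- Hx0; apply (mono x N Hx); lia).
    apply (caputo_unique mu k (Q j) (x i)); auto.
    eapply caputo_ext; [intro t; symmetry; apply (Hint j Hj t)|reflexivity|].
    apply caputo_sum. intros l Hl. apply HD; auto; unfold K in Hl; lia. }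
  assert (Hsf : forall F, sum_f 1 (N + 1 - k) F = sum_f_R0 (fun l => F (S l)) K).
  { intros F; unfold sum_f; rewrite HK; apply sum_eq; intros; rewrite Nat.add_1_r; reflexivity. }
  intros i j Hi Hj. rewrite !Hsf. split.
  - destruct i as [|a]; [lia|]. destruct j as [|b]; [lia|].
    rewrite kdelta_S.
    apply (MX.inv_comm K (fun a b => D (S a) (S b)) (fun a b => Q (S b) (x (S a)))); try (unfold K; lia).
    intros a' b' Ha Hb. rewrite <- kdelta_S, (HDQ (S a') (S b')) by (unfold K in *; lia).
    apply sum_eq; intros; ring.
  - rewrite (HDQ i j Hi Hj). apply sum_eq; intros; ring.
Qed.
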